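(* There are absolute constants $C_1,C_2>0$ such that for every $d\in\mathbb{N}$ and every real $N\ge C_1d$, $$|B^2_N|\le C_2|B^2_N\cap\mathbb{Z}^d|.$$ Consequently, for every $N\ge C_1d$, $$C_2^{-1}|B^2_N|\le|B^2_N\cap\mathbb{Z}^d|\le 2e^{1/(8C_1^2)}|B^2_N|.$$
   Context: For $r>0$, $B^2_r=\{x\in\mathbb{R}^d:|x|\le r\}$ is the closed Euclidean ball of radius $r$ centered at the origin; $|B^2_r\cap\mathbb{Z}^d|$ is the number of lattice points in it and $|B^2_r|$ is its Lebesgue measure. *)

(* Defs.v *)
From Stdlib Require Import Reals Lra Lia ZArith List.
Open Scope R_scope.

Definition zrange (K : nat) : list Z :=
  map (fun i => (Z.of_nat i - Z.of_nat K)%Z) (seq 0 (2 * K + 1)).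

(* lat d r2 = number of z in Z^d with z_1^2 + ... + z_d^2 <= r2.
   For an integer z with z^2 <= r2 we have |z| <= z^2 <= r2 < up r2,
   so ranging over |z| <= Z.to_nat (up r2) enumerates all candidates. *)
Fixpoint lat (d : nat) (r2 : R) : nat :=
  match d with
  | O => if Rle_dec 0 r2 then 1%nat else 0%nat
  | S d' =>
      fold_right (fun z acc => (lat d' (r2 - IZR z ^ 2) + acc)%nat) 0%nat
                 (zrange (Z.to_nat (up r2)))
  end.

Definition lattice_count (d : nat) (N : R) : nat := lat d (N ^ 2).

(* Volume (Lebesgue measure) of the unit Euclidean ball in R^d:
   omega_0 = 1, omega_1 = 2, omega_(d+2) = 2 PI / (d+2) * omega_d
   (equivalently PI^(d/2) / Gamma(d/2 + 1)). *)
Fixpoint unit_ball_vol (d : nat) : R :=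
  match d with
  | O => 1
  | S O => 2
  | S ((S d'') as d') => 2 * PI / INR (S d') * unit_ball_vol d''
  end.

Definition ball_volume (d : nat) (N : R) : R := unit_ball_vol d * N ^ d.

(* Main.v *)
Require Import Defs.
From Stdlib Require Import Reals Lra Lia ZArith List.
From Coquelicot Require Import Coquelicot.
Open Scope R_scope.

Definition G (d : nat) (y : R) : R := sqrt (Rmax y 0) ^ d.
Definition Cn (n : nat) : R := RInt (fun t => cos t ^ n) (-(PI/2)) (PI/2).

Lemma Rmax_abs y : Rmax y 0 = (y + Rabs y) / 2.
Proof. unfold Rmax; destruct (Rle_dec y 0); unfold Rabs; destruct (Rcase_abs y); lra. Qed.

Lemma cont_pow (f : R -> R) n x : continuous f x -> continuous (fun t => f t ^ n) x.
Proof.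
  intro Hf. induction n.
  - simpl. apply continuous_const.
  - apply continuous_ext with (f := fun t => mult (f t) (f t ^ n)).
    { intro; reflexivity. }
    apply (@continuous_mult _ R_AbsRing); auto.
Qed.

Lemma cont_G d (h : R -> R) x : continuous h x -> continuous (fun t => G d (h t)) x.
Proof.
  intro Hh. unfold G. apply cont_pow. apply continuous_sqrt_comp.
  apply continuous_ext with (f := fun t => mult (plus (h t) (Rabs (h t))) (/2)).
  { intro; rewrite Rmax_abs; reflexivity. }
  apply (@continuous_mult _ R_AbsRing). 2: apply continuous_const.
  apply (@continuous_plus _ R_AbsRing R_NormedModule); auto. apply continuous_Rabs_comp; auto.
Qed.

Lemma cont_quad B x : continuous (fun t => B - t ^ 2) x.
Proof. apply continuity_pt_filterlim. reg. Qed.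

Lemma cont_cospow n x : continuous (fun t => cos t ^ n) x.
Proof. apply cont_pow. apply continuity_pt_filterlim. apply continuity_cos. Qed.

Lemma ex_cospow n a b : ex_RInt (fun t => cos t ^ n) a b.
Proof. apply (@ex_RInt_continuous R_CompleteNormedModule). intros; apply cont_cospow. Qed.

Lemma Cn_rec n : INR (n+2) * Cn (n+2) = INR (n+1) * Cn n.
Proof.
  assert (H := is_RInt_derive (fun t => sin t * cos t ^ (n+1))
     (fun t => INR (n+2) * cos t ^ (n+2) - INR (n+1) * cos t ^ n) (-(PI/2)) (PI/2)).
  assert (E : RInt (fun t => INR (n+2) * cos t ^ (n+2) - INR (n+1) * cos t ^ n) (-(PI/2)) (PI/2) = 0).
  { apply (@is_RInt_unique R_CompleteNormedModule). 
    replace 0 with (minus (sin (PI/2) * cos (PI/2) ^ (n+1)) (sin (-(PI/2)) * cos (-(PI/2)) ^ (n+1))).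
    2:{ rewrite cos_neg, cos_PI2. rewrite pow_i by lia. unfold minus, plus, opp; simpl; ring. }
    apply H.
    - intros x _. auto_derive; auto.
      replace (n+1)%nat with (S n) by lia. replace (n+2)%nat with (S (S n)) by lia.
      rewrite !S_INR. simpl pred. 
      assert (sin x ^ 2 = 1 - cos x ^ 2) by (rewrite <- (sin2_cos2 x); unfold Rsqr; ring).
      replace (1 * cos x * cos x ^ S n + sin x * (1 * - sin x * ((INR n + 1) * cos x ^ n))) with
       (cos x ^ 2 * cos x ^ n - (INR n + 1) * sin x ^ 2 * cos x ^ n) by (simpl; ring).
      rewrite H0. simpl. ring.
    - intros x _. apply continuity_pt_filterlim. reg. }
  assert (H2 : is_RInt (fun t => minus (scal (INR (n+2)) (cos t ^ (n+2))) (scal (INR (n+1)) (cos t ^ n)))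
     (-(PI/2)) (PI/2) (minus (scal (INR (n+2)) (Cn (n+2))) (scal (INR (n+1)) (Cn n)))).
  { apply (@is_RInt_minus R_NormedModule); apply (@is_RInt_scal R_NormedModule);
      apply (@RInt_correct R_CompleteNormedModule), ex_cospow. }
  apply (@is_RInt_unique R_CompleteNormedModule) in H2.
  unfold minus, plus, opp, scal in H2; simpl in H2; unfold mult in H2; simpl in H2.
  unfold Rminus in E. rewrite E in H2. lra.
Qed.

Lemma Cn0 : Cn 0 = PI.
Proof.
  unfold Cn. simpl pow. rewrite RInt_const. unfold scal; simpl; unfold mult; simpl. lra.
Qed.

Lemma Cn1 : Cn 1 = 2.
Proof.
  unfold Cn. apply (@is_RInt_unique R_CompleteNormedModule).
  assert (E : minus (sin (PI/2)) (sin (-(PI/2))) = 2).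
  { rewrite sin_neg, sin_PI2. unfold minus, plus, opp; simpl; ring. }
  rewrite <- E at 3.
  apply (@is_RInt_derive R_CompleteNormedModule).
  - intros x _. auto_derive; auto. ring.
  - intros; apply cont_cospow.
Qed.

Lemma om_S_aux : forall d, unit_ball_vol (S d) = unit_ball_vol d * Cn (S d) /\
                    unit_ball_vol (S (S d)) = unit_ball_vol (S d) * Cn (S (S d)).
Proof.
  induction d as [|d IH].
  - split.
    + simpl. rewrite Cn1. ring.
    + assert (H := Cn_rec 0). simpl plus in H. rewrite Cn0 in H.
      change (unit_ball_vol 2) with (2 * PI / INR 2 * 1). simpl. simpl in H. match goal with |- ?g => idtac g end. lra.
  - destruct IH as [IH1 IH2]. split; auto.
    assert (H := Cn_rec (S d)). replace (S d + 2)%nat with (S (S (S d))) in H by lia.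
    replace (S d + 1)%nat with (S (S d)) in H by lia.
    change (unit_ball_vol (S (S (S d)))) with (2 * PI / INR (S (S (S d))) * unit_ball_vol (S d)).
    change (unit_ball_vol (S (S d))) with (2 * PI / INR (S (S d)) * unit_ball_vol d).
    rewrite IH1.
    assert (INR (S (S d)) > 0) by (apply lt_0_INR; lia).
    assert (INR (S (S (S d))) > 0) by (apply lt_0_INR; lia).
    replace (Cn (S (S (S d)))) with (INR (S (S d)) * Cn (S d) / INR (S (S (S d)))).
    2:{ field_simplify_eq; [|lra]. lra. }
    field; lra.
Qed.

Lemma om_S d : unit_ball_vol (S d) = unit_ball_vol d * Cn (S d).
Proof. apply om_S_aux. Qed.

Lemma G_nonpos d y : (1 <= d)%nat -> y <= 0 -> G d y = 0.
Proof.
  intros Hd Hy. unfold G. rewrite Rmax_right by lra. rewrite sqrt_0. apply pow_i. lia.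
Qed.

Lemma G_sq d x : 0 <= x -> G d (x ^ 2) = x ^ d.
Proof.
  intro Hx. unfold G. rewrite Rmax_left by nra. rewrite <- Rsqr_pow2, sqrt_Rsqr; auto.
Qed.

Lemma ex_G d B a b : ex_RInt (fun t => G d (B - t ^ 2)) a b.
Proof.
  apply (@ex_RInt_continuous R_CompleteNormedModule). intros. apply cont_G. apply cont_quad.
Qed.

Lemma RInt_zero_ext (f : R -> R) a b : (forall x, Rmin a b < x < Rmax a b -> f x = 0) -> RInt f a b = 0.
Proof.
  intro H. rewrite (RInt_ext f (fun _ => 0)) by auto. rewrite RInt_const.
  unfold scal; simpl; unfold mult; simpl. ring.
Qed.

Lemma KA d B M : (1 <= d)%nat -> sqrt (Rmax B 0) <= M ->
  unit_ball_vol d * RInt (fun t => G d (B - t ^ 2)) (-M) M = unit_ball_vol (S d) * G (S d) B.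
Proof.
  intros Hd HR.
  destruct (Rle_dec B 0) as [HB|HB].
  - rewrite (G_nonpos (S d)) by (lia || lra). rewrite RInt_zero_ext. ring.
    intros x _. apply G_nonpos; auto. nra.
  - assert (HB' : 0 < B) by lra. clear HB.
    set (r := sqrt B). assert (Hr : 0 < r) by (apply sqrt_lt_R0; auto).
    assert (Hr2 : r ^ 2 = B) by (unfold r; simpl; rewrite Rmult_1_r; apply sqrt_sqrt; lra).
    assert (HrR : r <= M) by (unfold r; rewrite Rmax_left in HR; lra).
    rewrite <- (RInt_Chasles _ (-M) (-r) M) by apply ex_G.
    rewrite <- (RInt_Chasles _ (-r) r M) by apply ex_G.
    rewrite (RInt_zero_ext _ (-M) (-r)).
    2:{ intros x Hx. rewrite Rmin_left in Hx by lra. rewrite Rmax_right in Hx by lra.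
        apply G_nonpos; auto. nra. }
    rewrite (RInt_zero_ext _ r M).
    2:{ intros x Hx. rewrite Rmin_left in Hx by lra. rewrite Rmax_right in Hx by lra.
        apply G_nonpos; auto. nra. }
    assert (Hm : RInt (fun t => G d (B - t ^ 2)) (-r) r = r ^ (S d) * Cn (S d)).
    { assert (E := RInt_comp (fun t => G d (B - t ^ 2)) (fun y => r * sin y) (fun y => r * cos y)
                (-(PI/2)) (PI/2)).
      cbv beta in E. rewrite sin_neg, sin_PI2 in E. rewrite <- Ropp_mult_distr_r, !Rmult_1_r in E.
      rewrite <- E.
      - unfold Cn. rewrite <- (RInt_scal (V:=R_CompleteNormedModule)) by apply ex_cospow.
        apply RInt_ext. intros x Hx.
        rewrite Rmin_left in Hx by (pose proof PI_RGT_0; lra). rewrite Rmax_right in Hx by (pose proof PI_RGT_0; lra).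
        assert (Hc : 0 < cos x) by (apply cos_gt_0; lra).
        replace (B - (r * sin x) ^ 2) with ((r * cos x) ^ 2).
        2:{ rewrite <- Hr2. assert (sin x ^ 2 + cos x ^ 2 = 1) by (rewrite <- (sin2_cos2 x); unfold Rsqr; ring). nra. }
        rewrite G_sq by (apply Rmult_le_pos; lra).
        unfold scal; simpl; unfold mult; simpl. match goal with |- ?a = ?b => change (@eq R a b) end. rewrite Rpow_mult_distr. ring.
      - intros. apply cont_G. apply cont_quad.
      - intros. split.
        + auto_derive; auto. ring.
        + apply continuity_pt_filterlim. reg. }
    rewrite om_S, Hm. unfold plus; simpl.
    unfold G. rewrite Rmax_left by lra. fold r. simpl. ring.
Qed.

Lemma tangent_aux : forall j p q, 0 <= p -> 0 <= q ->
  p ^ (j+2) + (INR (j+2) / 2) * p ^ j * (q ^ 2 - p ^ 2) <= q ^ (j+2) /\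
  p ^ (j+3) + (INR (j+3) / 2) * p ^ (S j) * (q ^ 2 - p ^ 2) <= q ^ (j+3).
Proof.
  induction j as [|j IH]; intros p q Hp Hq.
  - simpl. split. nra.
    assert (0 <= (q - p) ^ 2 * (q + p / 2)) by (apply Rmult_le_pos; [apply pow2_ge_0 | lra]).
    assert (E : q * (q * (q * 1)) - (p * (p * (p * 1)) + (1 + 1 + 1) / 2 * (p * 1) * (q * (q * 1) - p * (p * 1)))
       = (q - p) ^ 2 * (q + p / 2)) by (simpl; field). lra.
  - destruct (IH p q Hp Hq) as [_ H2]. split; [replace (S j + 2)%nat with (j+3)%nat by lia; exact H2|].
    destruct (IH p q Hp Hq) as [H1 _].
    replace (S j + 3)%nat with (S (S (j+2))) by lia.
    replace (S (S j)) with (j+2)%nat by lia.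
    assert (Hq2 : 0 <= q ^ 2) by nra.
    assert (H3 : q ^ 2 * (p ^ (j+2) + (INR (j+2) / 2) * p ^ j * (q ^ 2 - p ^ 2)) <= q ^ 2 * q ^ (j+2))
      by (apply Rmult_le_compat_l; auto).
    assert (Hpj : 0 <= p ^ j) by (apply pow_le; auto).
    assert (E1 : q ^ S (S (j+2)) = q ^ 2 * q ^ (j+2)) by (simpl; ring).
    assert (E2 : p ^ S (S (j+2)) = p ^ 2 * p ^ (j+2)) by (simpl; ring).
    assert (E3 : p ^ (j+2) = p ^ 2 * p ^ j) by (rewrite pow_add; ring).
    rewrite E1, E2. rewrite E3 in *. rewrite S_INR, S_INR.
    assert (0 <= INR (j+2) / 2 * p ^ j * (q ^ 2 - p ^ 2) ^ 2).
    { apply Rmult_le_pos; [apply Rmult_le_pos|apply pow2_ge_0]; auto. apply Rmult_le_pos; [apply pos_INR|lra]. }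
    assert (E : q ^ 2 * (p ^ 2 * p ^ j + INR (j + 2) / 2 * p ^ j * (q ^ 2 - p ^ 2)) -
       (p ^ 2 * (p ^ 2 * p ^ j) + (INR (j + 2) + 1 + 1) / 2 * (p ^ 2 * p ^ j) * (q ^ 2 - p ^ 2))
       = INR (j+2) / 2 * p ^ j * (q ^ 2 - p ^ 2) ^ 2) by field.
    lra.
Qed.

Lemma tangent d p q : (2 <= d)%nat -> 0 <= p -> 0 <= q ->
  p ^ d + (INR d / 2) * p ^ (d - 2) * (q ^ 2 - p ^ 2) <= q ^ d.
Proof.
  intros Hd Hp Hq.
  destruct (Nat.Even_or_Odd d) as [[j Hj]|[j Hj]].
  - destruct j; [lia|]. replace d with (j + j + 2)%nat by lia.
    replace (j + j + 2 - 2)%nat with (j + j)%nat by lia. apply tangent_aux; auto.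
  - destruct j; [lia|]. replace d with (j + j + 3)%nat by lia.
    replace (j + j + 3 - 2)%nat with (S (j + j))%nat by lia. apply tangent_aux; auto.
Qed.

Lemma sqrt_pow_convex d a b l : (2 <= d)%nat -> 0 <= a -> 0 <= b -> 0 <= l <= 1 ->
  sqrt (l * a + (1 - l) * b) ^ d <= l * sqrt a ^ d + (1 - l) * sqrt b ^ d.
Proof.
  intros Hd Ha Hb Hl.
  set (s := l * a + (1 - l) * b).
  assert (Hs : 0 <= s) by (unfold s; nra).
  set (p := sqrt s). assert (Hp : 0 <= p) by apply sqrt_pos.
  assert (Hp2 : p ^ 2 = s) by (unfold p; simpl; rewrite Rmult_1_r; apply sqrt_sqrt; auto).
  set (c := INR d / 2 * p ^ (d - 2)).
  assert (Ta := tangent d p (sqrt a) Hd Hp (sqrt_pos a)).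
  assert (Tb := tangent d p (sqrt b) Hd Hp (sqrt_pos b)).
  assert (Ea : sqrt a ^ 2 = a) by (simpl; rewrite Rmult_1_r; apply sqrt_sqrt; auto).
  assert (Eb : sqrt b ^ 2 = b) by (simpl; rewrite Rmult_1_r; apply sqrt_sqrt; auto).
  rewrite Ea, Hp2 in Ta. rewrite Eb, Hp2 in Tb. fold c in Ta, Tb.
  assert (l * (p ^ d + c * (a - s)) <= l * sqrt a ^ d) by (apply Rmult_le_compat_l; lra).
  assert ((1 - l) * (p ^ d + c * (b - s)) <= (1 - l) * sqrt b ^ d) by (apply Rmult_le_compat_l; lra).
  assert (E : l * (p ^ d + c * (a - s)) + (1 - l) * (p ^ d + c * (b - s)) = p ^ d) by (unfold s; ring).
  lra.
Qed.

Lemma G_mono d x y : x <= y -> G d x <= G d y.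
Proof.
  intro H. unfold G. apply pow_incr. split. apply sqrt_pos.
  apply sqrt_le_1_alt. unfold Rmax; destruct (Rle_dec x 0), (Rle_dec y 0); lra.
Qed.

Lemma G_nonneg d x : 0 <= G d x.
Proof. unfold G. apply pow_le, sqrt_pos. Qed.

Lemma G_convex d x y l : (2 <= d)%nat -> 0 <= l <= 1 ->
  G d (l * x + (1 - l) * y) <= l * G d x + (1 - l) * G d y.
Proof.
  intros Hd Hl.
  apply Rle_trans with (G d (l * Rmax x 0 + (1 - l) * Rmax y 0)).
  - apply G_mono. unfold Rmax; destruct (Rle_dec x 0), (Rle_dec y 0); nra.
  - unfold G. rewrite (Rmax_left (l * Rmax x 0 + (1 - l) * Rmax y 0)).
    2:{ assert (0 <= Rmax x 0) by apply Rmax_r. assert (0 <= Rmax y 0) by apply Rmax_r. nra. }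
    apply sqrt_pow_convex; auto; apply Rmax_r.
Qed.

Lemma cont_quad2 B c x : continuous (fun t => B - (c - t) ^ 2) x.
Proof. apply continuity_pt_filterlim. reg. Qed.

Lemma up_step d B z : (2 <= d)%nat ->
  G d (B - z ^ 2) <= RInt (fun t => G d (B + 1/4 - t ^ 2)) (z - 1/2) (z + 1/2).
Proof.
  intros Hd.
  set (h := fun t => G d (B + 1/4 - t ^ 2)).
  assert (Hsym : RInt (fun t => h (2 * z - t)) (z - 1/2) (z + 1/2) = RInt h (z - 1/2) (z + 1/2)).
  { assert (E := RInt_comp_lin h (-1) (2 * z) (z - 1/2) (z + 1/2) (ex_G _ _ _ _)).
    rewrite RInt_scal in E.
    2:{ apply (@ex_RInt_continuous R_CompleteNormedModule). intros. apply cont_G.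
        apply continuity_pt_filterlim. reg. }
    replace (-1 * (z - 1/2) + 2 * z) with (z + 1/2) in E by ring.
    replace (-1 * (z + 1/2) + 2 * z) with (z - 1/2) in E by ring.
    rewrite <- (opp_RInt_swap h) in E by apply ex_G.
    unfold scal, opp in E; simpl in E; unfold mult in E; simpl in E.
    rewrite (RInt_ext (fun y => h (-1 * y + 2 * z)) (fun t => h (2 * z - t))) in E.
    2:{ intros; f_equal; ring. }
    lra. }
  assert (Hex1 : ex_RInt h (z - 1/2) (z + 1/2)) by apply ex_G.
  assert (Hex2 : ex_RInt (fun t => h (2 * z - t)) (z - 1/2) (z + 1/2)).
  { apply (@ex_RInt_continuous R_CompleteNormedModule). intros. apply cont_G. apply cont_quad2. }
  assert (Hle : RInt (fun _ => 2 * G d (B - z ^ 2)) (z - 1/2) (z + 1/2)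
               <= RInt (fun t => h t + h (2 * z - t)) (z - 1/2) (z + 1/2)).
  { apply RInt_le. lra. apply ex_RInt_const.
    apply (ex_RInt_plus (V:=R_CompleteNormedModule)); auto.
    intros t Ht. unfold h.
    set (u := t - z).
    assert (Hu : u ^ 2 <= 1/4) by (unfold u; nra).
    set (b := B - z ^ 2).
    assert (H1 : G d (b - 2 * z * u) <= G d (B + 1/4 - t ^ 2)).
    { apply G_mono. unfold b, u. nra. }
    assert (H2 : G d (b + 2 * z * u) <= G d (B + 1/4 - (2 * z - t) ^ 2)).
    { apply G_mono. unfold b, u. nra. }
    assert (H3 := G_convex d (b - 2 * z * u) (b + 2 * z * u) (1/2) Hd).
    replace (1/2 * (b - 2 * z * u) + (1 - 1/2) * (b + 2 * z * u)) with b in H3 by field.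
    assert (G d b <= 1 / 2 * G d (b - 2 * z * u) + (1 - 1 / 2) * G d (b + 2 * z * u)) by (apply H3; lra).
    lra. }
  rewrite RInt_const in Hle. rewrite (RInt_plus (V:=R_CompleteNormedModule)) in Hle by auto.
  rewrite Hsym in Hle. unfold scal, plus in Hle; simpl in Hle; unfold mult in Hle; simpl in Hle.
  replace (z + 1 / 2 - (z - 1 / 2)) with 1 in Hle by field. replace (B - z * (z * 1)) with (B - z ^ 2) in Hle by ring. lra.
Qed.

Lemma low_step d B z : (2 <= d)%nat ->
  RInt (fun t => G d (B - 1/4 - t ^ 2)) z (z + 1) <= (G d (B - z ^ 2) + G d (B - (z + 1) ^ 2)) / 2.
Proof.
  intros Hd.
  set (P := G d (B - z ^ 2)). set (Q := G d (B - (z + 1) ^ 2)).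
  assert (Hlin : is_RInt (fun t => (z + 1 - t) * P + (t - z) * Q) z (z + 1) ((P + Q) / 2)).
  { assert (E : (P + Q) / 2 = minus ((-(z + 1 - (z+1)) ^ 2 / 2) * P + ((z+1) - z) ^ 2 / 2 * Q)
                                    ((-(z + 1 - z) ^ 2 / 2) * P + (z - z) ^ 2 / 2 * Q)).
    { unfold minus, plus, opp; simpl. field. }
    rewrite E.
    apply (@is_RInt_derive R_CompleteNormedModule (fun t => (-(z + 1 - t) ^ 2 / 2) * P + (t - z) ^ 2 / 2 * Q)).
    - intros x _. auto_derive; auto. field.
    - intros. apply continuity_pt_filterlim. reg. }
  apply (@is_RInt_unique R_CompleteNormedModule) in Hlin.
  rewrite <- Hlin. apply RInt_le. lra. apply ex_G.
  apply (@ex_RInt_continuous R_CompleteNormedModule). intros. apply continuity_pt_filterlim. reg.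
  intros t Ht.
  set (l := z + 1 - t).
  apply Rle_trans with (G d (l * (B - z ^ 2) + (1 - l) * (B - (z + 1) ^ 2))).
  - apply G_mono. unfold l. assert (0 <= (t - z - 1/2) ^ 2) by apply pow2_ge_0.
    assert (E : (z + 1 - t) * (B - z ^ 2) + (1 - (z + 1 - t)) * (B - (z + 1) ^ 2) - (B - 1/4 - t ^ 2) = (t - z - 1/2) ^ 2) by field. lra.
  - replace (t - z) with (1 - l) by (unfold l; ring). apply G_convex; auto. unfold l; lra.
Qed.

Definition sumS (h : nat -> R) (s n : nat) : R := fold_right (fun i acc => h i + acc) 0 (seq s n).

Lemma sumS_S h s n : sumS h s (S n) = h s + sumS h (S s) n.
Proof. reflexivity. Qed.

Lemma sumS_0 h s : sumS h s 0 = 0.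
Proof. reflexivity. Qed.

Lemma sumS_le h1 h2 s n : (forall i, h1 i <= h2 i) -> sumS h1 s n <= sumS h2 s n.
Proof.
  intro H. revert s; induction n; intro s. rewrite !sumS_0; lra.
  rewrite !sumS_S. specialize (IHn (S s)). specialize (H s). lra.
Qed.

Lemma sumS_scal c h s n : sumS (fun i => c * h i) s n = c * sumS h s n.
Proof.
  revert s; induction n; intro s. rewrite !sumS_0; ring.
  rewrite !sumS_S, IHn. ring.
Qed.

Lemma sumS_ext h1 h2 s n : (forall i, (s <= i < s + n)%nat -> h1 i = h2 i) -> sumS h1 s n = sumS h2 s n.
Proof.
  revert s; induction n; intros s H. reflexivity.
  rewrite !sumS_S. rewrite H by lia. rewrite (IHn (S s)). reflexivity. intros; apply H; lia.
Qed.

Lemma sumS_const c s n : sumS (fun _ => c) s n = INR n * c.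
Proof.
  revert s; induction n; intro s. rewrite sumS_0; simpl; ring.
  rewrite sumS_S, IHn, S_INR. ring.
Qed.

Lemma sumS_app h s a b : sumS h s (a + b) = sumS h s a + sumS h (s + a) b.
Proof.
  revert s; induction a; intro s. rewrite Nat.add_0_l, sumS_0, Nat.add_0_r. ring.
  rewrite Nat.add_succ_l, !sumS_S, IHa. replace (S s + a)%nat with (s + S a)%nat by lia. ring.
Qed.

Lemma trap h s n : sumS h s (S n) = sumS (fun i => (h i + h (S i)) / 2) s n + (h s + h (s + n)%nat) / 2.
Proof.
  revert s; induction n; intro s.
  - rewrite sumS_S, !sumS_0, Nat.add_0_r. field.
  - rewrite sumS_S, IHn, (sumS_S _ s n). replace (S s + n)%nat with (s + S n)%nat by lia. field.
Qed.

Lemma up_sum (f : R -> R) (g : nat -> R) K s n :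
  (forall a b, ex_RInt f a b) ->
  (forall i, g i <= RInt f (INR i - K - 1/2) (INR i - K + 1/2)) ->
  sumS g s n <= RInt f (INR s - K - 1/2) (INR s + INR n - K - 1/2).
Proof.
  intros Hex Hg. revert s; induction n; intro s.
  - rewrite sumS_0. simpl INR. replace (INR s + 0 - K - 1/2) with (INR s - K - 1/2) by field.
    rewrite RInt_point. unfold zero; simpl; lra.
  - rewrite sumS_S. specialize (IHn (S s)). specialize (Hg s).
    rewrite <- (RInt_Chasles f (INR s - K - 1/2) (INR s - K + 1/2)) by apply Hex.
    rewrite !S_INR in *.
    replace (INR s + 1 - K - 1/2) with (INR s - K + 1/2) in IHn by field.
    replace (INR s + 1 + INR n - K - 1/2) with (INR s + (INR n + 1) - K - 1/2) in IHn by field.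
    unfold plus; simpl. lra.
Qed.

Lemma low_sum (f : R -> R) (g : nat -> R) K s n :
  (forall a b, ex_RInt f a b) ->
  (forall i, RInt f (INR i - K) (INR i - K + 1) <= (g i + g (S i)) / 2) ->
  RInt f (INR s - K) (INR s + INR n - K) <= sumS (fun i => (g i + g (S i)) / 2) s n.
Proof.
  intros Hex Hg. revert s; induction n; intro s.
  - rewrite sumS_0. simpl INR. replace (INR s + 0 - K) with (INR s - K) by field.
    rewrite RInt_point. unfold zero; simpl; lra.
  - rewrite sumS_S. specialize (IHn (S s)). specialize (Hg s).
    rewrite <- (RInt_Chasles f (INR s - K) (INR s - K + 1)) by apply Hex.
    rewrite !S_INR in *.
    replace (INR s + 1 - K) with (INR s - K + 1) in IHn by field.
    replace (INR s + 1 + INR n - K) with (INR s + (INR n + 1) - K) in IHn by field.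
    unfold plus; simpl. lra.
Qed.

Lemma RInt_sub (f : R -> R) a b M : (forall a b, ex_RInt f a b) -> (forall x, 0 <= f x) ->
  -M <= a -> a <= b -> b <= M -> RInt f a b <= RInt f (-M) M.
Proof.
  intros Hex Hf H1 H2 H3.
  rewrite <- (RInt_Chasles f (-M) a M) by apply Hex.
  rewrite <- (RInt_Chasles f a b M) by apply Hex.
  assert (0 <= RInt f (-M) a) by (apply RInt_ge_0; auto).
  assert (0 <= RInt f b M) by (apply RInt_ge_0; auto).
  unfold plus; simpl. lra.
Qed.

Lemma lat_S_list d r2 K l :
  INR (fold_right (fun z acc => (lat d (r2 - IZR z ^ 2) + acc)%nat) 0%nat
        (map (fun i => (Z.of_nat i - Z.of_nat K)%Z) l))
  = fold_right (fun i acc => INR (lat d (r2 - (INR i - INR K) ^ 2)) + acc) 0 l.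
Proof.
  induction l as [|i l IH]. reflexivity.
  cbn [fold_right map]. rewrite plus_INR, IH. rewrite minus_IZR, <- !INR_IZR_INZ. reflexivity.
Qed.

Lemma lat_S_sum d r2 : INR (lat (S d) r2) =
  sumS (fun i => INR (lat d (r2 - (INR i - INR (Z.to_nat (up r2))) ^ 2))) 0 (2 * Z.to_nat (up r2) + 1).
Proof.
  change (lat (S d) r2) with (fold_right (fun z acc => (lat d (r2 - IZR z ^ 2) + acc)%nat) 0%nat
                 (zrange (Z.to_nat (up r2)))).
  unfold zrange. rewrite lat_S_list. reflexivity.
Qed.

Lemma lat0_val y : INR (lat 0 y) = if Rle_dec 0 y then 1 else 0.
Proof. simpl. destruct (Rle_dec 0 y); reflexivity. Qed.

Lemma lat_neg d x : x < 0 -> lat d x = 0%nat.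
Proof.
  revert x; induction d; intros x Hx.
  - simpl. destruct (Rle_dec 0 x); [lra|reflexivity].
  - simpl. generalize (zrange (Z.to_nat (up x))). induction l; simpl; auto.
    rewrite IHl, IHd. reflexivity. assert (0 <= IZR a ^ 2) by apply pow2_ge_0. lra.
Qed.

Lemma K_bound r2 : sqrt (Rmax r2 0) <= INR (Z.to_nat (up r2)).
Proof.
  destruct (Rle_dec r2 0).
  - rewrite Rmax_right by lra. rewrite sqrt_0. apply pos_INR.
  - rewrite Rmax_left by lra. destruct (archimed r2) as [H1 H2].
    assert (Hup : (0 < up r2)%Z) by (apply lt_IZR; lra).
    rewrite INR_IZR_INZ, Z2Nat.id by lia.
    assert (1 <= IZR (up r2)) by (apply IZR_le; lia).
    destruct (Rle_dec r2 1).
    + assert (sqrt r2 <= 1). { rewrite <- sqrt_1. apply sqrt_le_1_alt. lra. } lra.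
    + assert (sqrt r2 <= r2). 
      { rewrite <- (sqrt_square r2) at 2 by lra. apply sqrt_le_1_alt. nra. } lra.
Qed.

Lemma floor_nat x : 0 <= x -> exists m : nat, INR m <= sqrt x < INR m + 1.
Proof.
  intro Hx. set (y := sqrt x). assert (Hy : 0 <= y) by apply sqrt_pos.
  destruct (archimed y) as [H1 H2].
  assert (Hup0 : 0 < IZR (up y)) by lra. apply lt_IZR in Hup0.
  exists (Z.to_nat (up y - 1)). rewrite INR_IZR_INZ, Z2Nat.id by lia.
  rewrite minus_IZR. lra.
Qed.

Definition ind (x : R) (K i : nat) : R := if Rle_dec 0 (x - (INR i - INR K) ^ 2) then 1 else 0.

Lemma count1 x K m : 0 <= x -> INR m <= sqrt x < INR m + 1 -> (m <= K)%nat ->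
  sumS (ind x K) 0 (2 * K + 1) = 2 * INR m + 1.
Proof.
  intros Hx [Hm1 Hm2] HmK.
  assert (Hs : sqrt x * sqrt x = x) by (apply sqrt_sqrt; auto).
  assert (Hs0 : 0 <= sqrt x) by apply sqrt_pos.
  assert (Hm0 : 0 <= INR m) by apply pos_INR.
  replace (2 * K + 1)%nat with ((K - m) + ((2 * m + 1) + (K - m)))%nat by lia.
  rewrite (sumS_app _ 0 (K - m)), (sumS_app _ (0 + (K - m)) (2 * m + 1)).
  rewrite (sumS_ext _ (fun _ => 0) 0 (K - m)).
  2:{ intros i Hi. unfold ind. destruct (Rle_dec _ _) as [H|H]; [|reflexivity]. exfalso.
      assert (INR (i + m + 1) <= INR K) by (apply le_INR; lia).
      rewrite !plus_INR in H0. simpl in H0. nra. }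
  rewrite (sumS_ext _ (fun _ => 1) (0 + (K - m)) (2 * m + 1)).
  2:{ intros i Hi. unfold ind. destruct (Rle_dec _ _) as [H|H]; [reflexivity|]. exfalso.
      assert (INR K <= INR (i + m)) by (apply le_INR; lia).
      assert (INR i <= INR (K + m)) by (apply le_INR; lia).
      rewrite !plus_INR in *. apply H. 
      assert ((INR i - INR K) ^ 2 <= INR m ^ 2) by (simpl; nra).
      assert (INR m ^ 2 <= x) by (simpl; nra). lra. }
  rewrite (sumS_ext _ (fun _ => 0) (0 + (K - m) + (2 * m + 1)) (K - m)).
  2:{ intros i Hi. unfold ind. destruct (Rle_dec _ _) as [H|H]; [|reflexivity]. exfalso.
      assert (INR (K + m + 1) <= INR i) by (apply le_INR; lia).
      rewrite !plus_INR in H0. simpl in H0. nra. }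
  rewrite !sumS_const. rewrite plus_INR, mult_INR. simpl. ring.
Qed.

Lemma lat1_sum x : INR (lat 1 x) = sumS (ind x (Z.to_nat (up x))) 0 (2 * Z.to_nat (up x) + 1).
Proof.
  rewrite lat_S_sum. apply sumS_ext. intros i _. rewrite lat0_val. reflexivity.
Qed.

Lemma lat1_val x : 0 <= x -> exists m : nat, INR m <= sqrt x < INR m + 1 /\ INR (lat 1 x) = 2 * INR m + 1.
Proof.
  intro Hx. destruct (floor_nat x Hx) as [m Hm]. exists m. split; auto.
  rewrite lat1_sum. apply count1; auto.
  assert (H := K_bound x). rewrite Rmax_left in H by lra.
  apply INR_le. lra.
Qed.

Lemma om_pos_aux : forall d, 0 < unit_ball_vol d /\ 0 < unit_ball_vol (S d).
Proof.
  induction d as [|d [IH1 IH2]].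
  - simpl; lra.
  - split; auto. change (unit_ball_vol (S (S d))) with (2 * PI / INR (S (S d)) * unit_ball_vol d).
    assert (0 < INR (S (S d))) by (apply lt_0_INR; lia). pose proof PI_RGT_0.
    apply Rmult_lt_0_compat; auto. apply Rdiv_lt_0_compat; lra.
Qed.

Lemma om_pos d : 0 < unit_ball_vol d.
Proof. apply om_pos_aux. Qed.

Lemma om2 : unit_ball_vol 2 = PI.
Proof. simpl. field. Qed.

Lemma G2 y : G 2 y = Rmax y 0.
Proof. unfold G. simpl. rewrite Rmult_1_r. apply sqrt_sqrt, Rmax_r. Qed.

Lemma sq_sqrt x : 0 <= x -> sqrt x * sqrt x = x.
Proof. apply sqrt_sqrt. Qed.

Lemma U2 A : INR (lat 2 A) <= 2 * unit_ball_vol 2 * G 2 (A + INR 2 / 4).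
Proof.
  rewrite om2, G2. pose proof PI_RGT_0.
  destruct (Rlt_dec A 0) as [HA|HA].
  - rewrite lat_neg by auto. change (INR 0) with 0. assert (0 <= Rmax (A + INR 2 / 4) 0) by apply Rmax_r. nra.
  - assert (HA' : 0 <= A) by lra. clear HA.
    rewrite lat_S_sum. set (K := Z.to_nat (up A)).
    set (s := sqrt A). assert (Hs : 0 <= s) by apply sqrt_pos.
    assert (Hss : s * s = A) by (apply sq_sqrt; auto).
    apply Rle_trans with (sumS (fun i => (2 * s + 1) * ind A K i) 0 (2 * K + 1)).
    { apply sumS_le. intro i. unfold ind. destruct (Rle_dec 0 (A - (INR i - INR K) ^ 2)) as [H1|H1].
      - destruct (lat1_val _ H1) as [m [Hm1 Hm2]]. rewrite Hm2.
        assert (sqrt (A - (INR i - INR K) ^ 2) <= s) by (apply sqrt_le_1_alt; assert (0 <= (INR i - INR K)^2) by apply pow2_ge_0; lra).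
        lra.
      - rewrite lat_neg by lra. simpl. lra. }
    rewrite sumS_scal. fold K. 
    destruct (lat1_val A HA') as [m [Hm1 Hm2]].
    rewrite lat1_sum in Hm2. fold K in Hm2. rewrite Hm2.
    fold s in Hm1.
    rewrite Rmax_left by (simpl; lra). simpl INR.
    assert (3 < PI) by (pose proof PI2_3_2; lra).
    assert (0 <= 2 * A + 1) by lra.
    assert (PI * (2 * A + 1) >= 3 * (2 * A + 1)) by nra.
    assert ((2 * s + 1) * (2 * INR m + 1) <= (2 * s + 1) * (2 * s + 1)) by (apply Rmult_le_compat_l; lra).
    assert (0 <= (s - 1) * (s - 1)) by apply Rle_0_sqr.
    assert (E1 : (2 * s + 1) * (2 * s + 1) = 4 * A + 4 * s + 1) by (rewrite <- Hss; ring).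
    assert (E2 : 2 * PI * (A + (1 + 1) / 4) = PI * (2 * A + 1)) by field.
    assert (E3 : (s - 1) * (s - 1) = A - 2 * s + 1) by (rewrite <- Hss; ring).
    rewrite E2. lra.
Qed.

Lemma L2 A : 1 / 8 * unit_ball_vol 2 * G 2 (A - INR 2 / 4) <= INR (lat 2 A).
Proof.
  rewrite om2, G2. pose proof PI_RGT_0. pose proof PI_4. change (INR 2) with 2.
  destruct (Rle_dec A (1/2)) as [HA|HA].
  - rewrite Rmax_right by lra. rewrite Rmult_0_r. apply pos_INR.
  - rewrite Rmax_left by lra.
    assert (HA2 : 0 <= A / 2) by lra.
    destruct (lat1_val _ HA2) as [m [Hm1 Hm2]].
    rewrite lat_S_sum. set (K := Z.to_nat (up A)).
    set (s := sqrt (A / 2)). assert (Hs : 0 <= s) by apply sqrt_pos.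
    assert (Hss : s * s = A / 2) by (apply sq_sqrt; auto).
    fold s in Hm1.
    apply Rle_trans with (sumS (fun i => (2 * INR m + 1) * ind (A / 2) K i) 0 (2 * K + 1)).
    2:{ apply sumS_le. intro i. unfold ind. destruct (Rle_dec 0 (A / 2 - (INR i - INR K) ^ 2)) as [H1|H1].
      - assert (H2 : 0 <= A - (INR i - INR K) ^ 2) by lra.
        destruct (lat1_val _ H2) as [m' [Hm1' Hm2']]. rewrite Hm2'.
        assert (s <= sqrt (A - (INR i - INR K) ^ 2)) by (apply sqrt_le_1_alt; lra).
        assert (INR m < INR m' + 1) by lra.
        rewrite <- S_INR in H4. apply INR_lt in H4.
        assert (INR m <= INR m') by (apply le_INR; lia). lra.
      - rewrite Rmult_0_r. apply pos_INR. }
    rewrite sumS_scal. rewrite (count1 (A / 2) K m); auto.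
    2:{ apply INR_le. assert (HK := K_bound A). rewrite Rmax_left in HK by lra. fold K in HK.
        assert (s <= sqrt A) by (apply sqrt_le_1_alt; lra). lra. }
    assert (0 <= INR m) by apply pos_INR.
    destruct (Rle_dec s 1).
    + assert (1 <= (2 * INR m + 1) * (2 * INR m + 1)) by nra. nra.
    + assert (2 * s - 1 <= 2 * INR m + 1) by lra.
      assert ((2 * s - 1) * (2 * s - 1) <= (2 * INR m + 1) * (2 * INR m + 1)) by (apply Rmult_le_compat; lra).
      assert (PI * (A - 2/4) <= 4 * (A - 2 / 4)) by (apply Rmult_le_compat_r; lra).
      nra.
Qed.

Lemma U_all d : (2 <= d)%nat -> forall r2, INR (lat d r2) <= 2 * unit_ball_vol d * G d (r2 + INR d / 4).
Proof.
  induction d as [|d IH]; intros Hd r2; [lia|].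
  destruct (Nat.eq_dec d 1) as [->|Hd1]; [apply U2|].
  assert (Hd2 : (2 <= d)%nat) by lia. specialize (IH Hd2).
  rewrite lat_S_sum. set (K := Z.to_nat (up r2)).
  set (B := r2 + INR d / 4).
  assert (Hom := om_pos d).
  apply Rle_trans with (sumS (fun i => 2 * unit_ball_vol d * G d (B - (INR i - INR K) ^ 2)) 0 (2 * K + 1)).
  { apply sumS_le. intro i. 
    replace (B - (INR i - INR K) ^ 2) with (r2 - (INR i - INR K) ^ 2 + INR d / 4) by (unfold B; field).
    apply IH. }
  rewrite sumS_scal.
  set (f := fun t => G d (B + 1/4 - t ^ 2)).
  assert (Hex : forall a b, ex_RInt f a b) by (intros; apply ex_G).
  assert (Hs := up_sum f (fun i => G d (B - (INR i - INR K) ^ 2)) (INR K) 0 (2 * K + 1) Hex).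
  assert (Hs' : sumS (fun i => G d (B - (INR i - INR K) ^ 2)) 0 (2 * K + 1) <= RInt f (- INR K - 1/2) (INR K + 1/2)).
  { replace (- INR K - 1/2) with (INR 0 - INR K - 1/2) by (simpl; field).
    replace (INR K + 1/2) with (INR 0 + INR (2 * K + 1) - INR K - 1/2) by (rewrite plus_INR, mult_INR; simpl; field).
    apply Hs. intro i. apply up_step; auto. }
  set (M := Rmax (INR K + 1/2) (sqrt (Rmax (B + 1/4) 0))).
  assert (Hsub : RInt f (- INR K - 1/2) (INR K + 1/2) <= RInt f (-M) M).
  { assert (0 <= INR K) by apply pos_INR. assert (INR K + 1/2 <= M) by apply Rmax_l.
    apply RInt_sub; auto. intro; apply G_nonneg. all: lra. }
  assert (HKA := KA d (B + 1/4) M ltac:(lia) (Rmax_r _ _)).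
  fold f in HKA.
  replace (r2 + INR (S d) / 4) with (B + 1/4) by (unfold B; rewrite S_INR; field).
  assert (2 * unit_ball_vol d * sumS (fun i => G d (B - (INR i - INR K) ^ 2)) 0 (2 * K + 1) <=
          2 * unit_ball_vol d * RInt f (-M) M) by (apply Rmult_le_compat_l; lra).
  lra.
Qed.

Lemma L_all d : (2 <= d)%nat -> forall r2, 1 / 8 * unit_ball_vol d * G d (r2 - INR d / 4) <= INR (lat d r2).
Proof.
  induction d as [|d IH]; intros Hd r2; [lia|].
  destruct (Nat.eq_dec d 1) as [->|Hd1]; [apply L2|].
  assert (Hd2 : (2 <= d)%nat) by lia. specialize (IH Hd2).
  rewrite lat_S_sum. set (K := Z.to_nat (up r2)).
  set (B := r2 - INR d / 4).
  assert (Hom := om_pos d).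
  apply Rle_trans with (sumS (fun i => 1 / 8 * unit_ball_vol d * G d (B - (INR i - INR K) ^ 2)) 0 (2 * K + 1)).
  2:{ apply sumS_le. intro i. 
    replace (B - (INR i - INR K) ^ 2) with (r2 - (INR i - INR K) ^ 2 - INR d / 4) by (unfold B; field).
    apply IH. }
  rewrite sumS_scal.
  set (f := fun t => G d (B - 1/4 - t ^ 2)).
  set (g := fun i => G d (B - (INR i - INR K) ^ 2)).
  assert (Hex : forall a b, ex_RInt f a b) by (intros; apply ex_G).
  assert (Hs := low_sum f g (INR K) 0 (2 * K) Hex).
  assert (Hs' : RInt f (- INR K) (INR K) <= sumS g 0 (2 * K + 1)).
  { replace (2 * K + 1)%nat with (S (2 * K)) by lia. rewrite trap.
    assert (0 <= g 0%nat) by apply G_nonneg. assert (0 <= g (0 + 2 * K)%nat) by apply G_nonneg.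
    replace (- INR K) with (INR 0 - INR K) by (simpl; field).
    replace (INR K) with (INR 0 + INR (2 * K) - INR K) at 2 by (rewrite mult_INR; simpl; field).
    assert (RInt f (INR 0 - INR K) (INR 0 + INR (2 * K) - INR K) <= sumS (fun i => (g i + g (S i)) / 2) 0 (2 * K)).
    { apply Hs. intro i. unfold f, g. rewrite S_INR.
      replace (INR i + 1 - INR K) with ((INR i - INR K) + 1) by field.
      replace (INR i - INR K + 1) with ((INR i - INR K) + 1) by field.
      apply low_step; auto. }
    lra. }
  assert (HKA := KA d (B - 1/4) (INR K) ltac:(lia)).
  assert (HK : sqrt (Rmax (B - 1/4) 0) <= INR K).
  { apply Rle_trans with (sqrt (Rmax r2 0)). 2: apply K_bound.
    apply sqrt_le_1_alt. assert (0 <= INR d) by apply pos_INR.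
    unfold B, Rmax; destruct (Rle_dec (r2 - INR d / 4 - 1/4) 0), (Rle_dec r2 0); lra. }
  specialize (HKA HK). fold f in HKA.
  replace (r2 - INR (S d) / 4) with (B - 1/4) by (unfold B; rewrite S_INR; field).
  assert (1 / 8 * unit_ball_vol d * RInt f (- INR K) (INR K) <= 1 / 8 * unit_ball_vol d * sumS g 0 (2 * K + 1))
    by (apply Rmult_le_compat_l; lra).
  fold g. lra.
Qed.

Lemma bern n h : -1 <= h -> 1 + INR n * h <= (1 + h) ^ n.
Proof.
  intro Hh. induction n. simpl; lra.
  rewrite S_INR. simpl pow.
  assert (0 <= INR n * h * h) by (assert (0 <= INR n) by apply pos_INR; assert (0 <= h*h) by nra; nra).
  assert ((1 + h) * (1 + INR n * h) <= (1 + h) * (1 + h) ^ n) by (apply Rmult_le_compat_l; lra).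
  nra.
Qed.

Lemma exp_pow x n : exp x ^ n = exp (INR n * x).
Proof.
  induction n. simpl. rewrite Rmult_0_l, exp_0. reflexivity.
  rewrite S_INR. simpl pow. rewrite IHn. rewrite <- exp_plus. f_equal. ring.
Qed.

Lemma exp_le x y : x <= y -> exp x <= exp y.
Proof. intro H. destruct (Rle_lt_or_eq_dec x y H). apply Rlt_le, exp_increasing; auto. subst; lra. Qed.

Lemma final_big d N : (2 <= d)%nat -> INR d <= N ->
  unit_ball_vol d * N ^ d <= 11 * INR (lat d (N ^ 2)) /\
  INR (lat d (N ^ 2)) <= 2 * exp (1 / (8 * 1 ^ 2)) * (unit_ball_vol d * N ^ d).
Proof.
  intros Hd HN.
  assert (Hd2 : 2 <= INR d) by (change 2 with (INR 2); apply le_INR; auto).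
  assert (HN0 : 0 < N) by lra.
  assert (Hom := om_pos d).
  set (D := INR d) in *.
  assert (HN2 : 0 < N ^ 2) by (apply pow_lt; lra).
  assert (HDN : D * D <= N ^ 2) by (simpl; nra).
  split.
  - assert (HL := L_all d Hd (N ^ 2)). fold D in HL.
    set (h := - (D / (4 * N ^ 2))).
    assert (Hh1 : -1 <= h).
    { unfold h. assert (D / (4 * N ^ 2) <= 1); [|lra].
      apply Rmult_le_reg_r with (4 * N ^ 2); [lra|]. field_simplify; [|lra]. nra. }
    assert (HB := bern d h Hh1). fold D in HB.
    assert (HDh : D * h >= - 1/4).
    { unfold h. replace (D * - (D / (4 * N ^ 2))) with (- ((D * D) / (4 * N ^ 2))) by (field; lra).
      assert (D * D / (4 * N ^ 2) <= 1/4); [|lra].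
      apply Rmult_le_reg_r with (4 * N ^ 2); [lra|]. field_simplify; lra. }
    assert (Hsq : N * (1 + h) <= sqrt (Rmax (N ^ 2 - D / 4) 0)).
    { assert (E : N * (1 + h) = N - D / (4 * N)) by (unfold h; field; lra).
      assert (H0 : 0 <= N - D / (4 * N)).
      { assert (D / (4 * N) <= N); [|lra]. apply Rmult_le_reg_r with (4 * N); [lra|]. field_simplify; nra. }
      rewrite E. rewrite <- (sqrt_pow2 (N - D / (4 * N))) by auto.
      apply sqrt_le_1_alt.
      assert (E2 : (N - D / (4 * N)) ^ 2 = N ^ 2 - D / 2 + D * D / (16 * N ^ 2)) by (field; lra).
      rewrite E2. assert (D * D / (16 * N ^ 2) <= D / 4).
      { apply Rmult_le_reg_r with (16 * N ^ 2); [lra|]. field_simplify; [|lra]. nra. }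
      unfold Rmax. destruct (Rle_dec (N ^ 2 - D / 4) 0); lra. }
    assert (H1 : (N * (1 + h)) ^ d <= G d (N ^ 2 - D / 4)).
    { unfold G. apply pow_incr. split; auto. apply Rmult_le_pos; lra. }
    rewrite Rpow_mult_distr in H1.
    assert (H2 : N ^ d * (3/4) <= N ^ d * (1 + h) ^ d).
    { apply Rmult_le_compat_l. apply pow_le; lra. lra. }
    assert (0 <= N ^ d) by (apply pow_le; lra).
    assert (unit_ball_vol d * (N ^ d * (3 / 4)) <= unit_ball_vol d * G d (N ^ 2 - D / 4))
      by (apply Rmult_le_compat_l; lra).
    assert (0 <= INR (lat d (N ^ 2))) by apply pos_INR. lra.
  - assert (HU := U_all d Hd (N ^ 2)). fold D in HU.
    set (e := exp (D / (8 * N ^ 2))).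
    assert (He : 0 < e) by apply exp_pos.
    assert (Hsq : sqrt (Rmax (N ^ 2 + D / 4) 0) <= N * e).
    { rewrite Rmax_left by lra. rewrite <- (sqrt_pow2 (N * e)) by (apply Rmult_le_pos; lra).
      apply sqrt_le_1_alt. rewrite Rpow_mult_distr.
      assert (E : e ^ 2 = exp (D / (4 * N ^ 2))).
      { unfold e. rewrite exp_pow. f_equal. simpl. field. lra. }
      rewrite E. assert (H := exp_ineq1_le (D / (4 * N ^ 2))).
      assert (N ^ 2 * (1 + D / (4 * N ^ 2)) <= N ^ 2 * exp (D / (4 * N ^ 2))) by (apply Rmult_le_compat_l; lra).
      replace (N ^ 2 * (1 + D / (4 * N ^ 2))) with (N ^ 2 + D / 4) in H0 by (field; lra). lra. }
    assert (H1 : G d (N ^ 2 + D / 4) <= (N * e) ^ d).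
    { unfold G. apply pow_incr. split; auto. apply sqrt_pos. }
    rewrite Rpow_mult_distr in H1. unfold e in H1. rewrite exp_pow in H1. fold D in H1.
    assert (H2 : exp (D * (D / (8 * N ^ 2))) <= exp (1 / (8 * 1 ^ 2))).
    { apply exp_le. replace (D * (D / (8 * N ^ 2))) with (D * D / (8 * N ^ 2)) by (field; lra).
      apply Rmult_le_reg_r with (8 * N ^ 2); [lra|]. field_simplify; lra. }
    assert (0 <= N ^ d) by (apply pow_le; lra).
    assert (N ^ d * exp (D * (D / (8 * N ^ 2))) <= N ^ d * exp (1 / (8 * 1 ^ 2))) by (apply Rmult_le_compat_l; lra).
    assert (2 * unit_ball_vol d * G d (N ^ 2 + D / 4) <= 2 * unit_ball_vol d * (N ^ d * exp (1 / (8 * 1 ^ 2))))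
      by (apply Rmult_le_compat_l; lra).
    lra.
Qed.

Theorem lemma5p3 :
  exists C1 C2 : R, 0 < C1 /\ 0 < C2 /\
    forall (d : nat) (N : R), C1 * INR d <= N ->
      ball_volume d N <= C2 * INR (lattice_count d N) /\
      / C2 * ball_volume d N <= INR (lattice_count d N) /\
      INR (lattice_count d N) <= 2 * exp (1 / (8 * C1 ^ 2)) * ball_volume d N.
Proof.
  exists 1, 11. split; [lra|]. split; [lra|].
  intros d N HN. rewrite Rmult_1_l in HN.
  unfold lattice_count, ball_volume.
  assert (Hx := exp_ineq1_le (1 / (8 * 1 ^ 2))).
  assert (Hx0 : 0 <= 1 / (8 * 1 ^ 2)) by (simpl; lra).
  assert (Hmain : unit_ball_vol d * N ^ d <= 11 * INR (lat d (N ^ 2)) /\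
      INR (lat d (N ^ 2)) <= 2 * exp (1 / (8 * 1 ^ 2)) * (unit_ball_vol d * N ^ d)).
  { destruct d as [|[|d']].
    - assert (E : INR (lat 0 (N ^ 2)) = 1).
      { rewrite lat0_val. destruct (Rle_dec 0 (N ^ 2)) as [_|n]; [reflexivity|].
        exfalso; apply n; apply pow2_ge_0. }
      rewrite E. change (unit_ball_vol 0) with 1. rewrite pow_O. lra.
    - change (INR 1) with 1 in HN.
      destruct (lat1_val (N ^ 2) ltac:(apply pow2_ge_0)) as [m [Hm1 Hm2]].
      rewrite sqrt_pow2 in Hm1 by lra. rewrite Hm2. change (unit_ball_vol 1) with 2. rewrite pow_1.
      assert (0 <= INR m) by apply pos_INR.
      assert (HNe : N * 1 <= N * exp (1 / (8 * 1 ^ 2))) by (apply Rmult_le_compat_l; lra).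
      split; nra.
    - apply final_big; auto. lia. }
  destruct Hmain as [H1 H2].
  split; [lra|]. split; [|lra].
  apply Rmult_le_reg_l with 11; [lra|]. rewrite <- Rmult_assoc, Rinv_r, Rmult_1_l; lra.
Qed.
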